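(* Let $0\le d<d'$ be integers and $\alpha_1,\dots,\alpha_{d'+1}>0$. If reconstruction is possible for the poset $\mathbb Z_{\ge0}^{d+1}$ with parameters $(\alpha_1,\dots,\alpha_{d+1})$, then reconstruction is possible for the poset $\mathbb Z_{\ge0}^{d'+1}$ with parameters $(\alpha_1,\dots,\alpha_{d'+1})$.
   Context: Gaussian broadcast model on $\mathbb{Z}_{\ge0}^{k+1}$ (for $k=d$ or $d'$) with parameters $(\alpha_1,\dots,\alpha_{k+1})$: order $u\le v$ iff $v-u\in\mathbb{Z}_{\ge0}^{k+1}$; $L_t$ = tuples with coordinate sum $t$; $\mathfrak p(v)$ = set of elements covered by $v$, so $|\mathfrak p(v)|$ is the number of positive coordinates. Let $X_0\sim\mathcal N(0,1)$, independently i.i.d. $W_{u\to v}\sim\mathcal N(0,1)$ for covering pairs $u\lessdot v$, $X_{\mathbf 0}=X_0$, and $X_v=\alpha_{|\mathfrak p(v)|}\sum_{u\in\mathfrak p(v)}(X_u+W_{u\to v})$ for $v\ne\mathbf 0$. Reconstruction is possible if there is $c:P\to\mathbb R$ with finitely many nonzero values on each layer such that $\zeta_t:=\sum_{u\in L_t}c_uX_u$ satisfies $\operatorname{Var}(\zeta_t)>0$ for all $t$ and $\operatorname{Cov}(\zeta_t,X_0)/\sqrt{\operatorname{Var}(\zeta_t)\operatorname{Var}(X_0)}\not\to0$ as $t\to\infty$. *)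

(* Defs.v *)
From HB Require Import structures.
From mathcomp Require Import all_boot all_order all_algebra.
From mathcomp Require Import all_classical all_reals all_analysis.
Set Implicit Arguments. Unset Strict Implicit. Unset Printing Implicit Defensive.
Import Order.TTheory GRing.Theory Num.Theory.
Local Open Scope classical_set_scope.
Local Open Scope ring_scope.

Definition vert (k : nat) := {ffun 'I_k.+1 -> nat}.

Definition vsum k (v : vert k) : nat := (\sum_(i < k.+1) v i)%N.

(* v - e_i  (used only when v i > 0, so that dec v i is covered by v) *)
Definition dec k (v : vert k) (i : 'I_k.+1) : vert k :=
  [ffun j => if j == i then (v j).-1 else v j].

(* |p(v)| = number of positive coordinates *)
Definition npos k (v : vert k) : nat := #|[pred i | (0 < v i)%N]|.

Definition layer k (t : nat) : seq (vert k) :=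
  seq.map (fun f : {ffun 'I_k.+1 -> 'I_t.+1} => [ffun i => val (f i)] : vert k)
    (seq.filter (fun f : {ffun 'I_k.+1 -> 'I_t.+1} =>
               (\sum_(i < k.+1) val (f i) == t)%N)
            (enum {ffun 'I_k.+1 -> 'I_t.+1})).

(* Independent standard Gaussian sources: None is X_0, Some (u, i) is the
   noise W_{u -> u + e_i} on the covering pair u <. u + e_i. *)
Definition source k := option (vert k * 'I_k.+1).

(* Coefficient of source s in X_v, where n is the layer of v.  This is the
   literal unfolding of X_0 and X_v = alpha_{|p(v)|} sum_{u in p(v)} (X_u + W_{u->v}). *)
Fixpoint coefX (R : realType) k (alpha : nat -> R) (n : nat) (v : vert k)
    (s : source k) : R :=
  match n with
  | 0 => if s is None then 1 else 0
  | n'.+1 => alpha (npos v) *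
      \sum_(i < k.+1 | (0 < v i)%N)
         (coefX alpha n' (dec v i) s + (s == Some (dec v i, i))%:R)
  end.

Definition Xcoef (R : realType) k (alpha : nat -> R) (v : vert k) (s : source k) : R :=
  coefX alpha (vsum v) v s.

(* All sources on which variables of layers <= t can depend. *)
Definition sources k (t : nat) : seq (source k) :=
  None :: [seq Some (u, i) | u <- flatten [seq layer k s | s <- iota 0 t],
                             i <- enum 'I_k.+1].

Definition zetacoef (R : realType) k (alpha : nat -> R) (c : vert k -> R)
    (t : nat) (s : source k) : R :=
  \sum_(u <- layer k t) c u * Xcoef alpha u s.

(* Var(zeta_t) and Cov(zeta_t, X_0) for linear combinations of
   independent N(0,1) sources; Var(X_0) = 1. *)
Definition var_zeta (R : realType) k (alpha : nat -> R) (c : vert k -> R) (t : nat) : R :=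
  \sum_(s <- sources k t) (zetacoef alpha c t s) ^+ 2.

Definition cov_zeta_X0 (R : realType) k (alpha : nat -> R) (c : vert k -> R) (t : nat) : R :=
  zetacoef alpha c t None.

Definition var_X0 (R : realType) : R := 1.

Definition corr_zeta_X0 (R : realType) k (alpha : nat -> R) (c : vert k -> R) (t : nat) : R :=
  cov_zeta_X0 alpha c t / Num.sqrt (var_zeta alpha c t * var_X0 R).

(* Reconstruction is possible on Z_{>=0}^{k+1} with parameters alpha
   (layers are finite, so "finitely many nonzero values on each layer" is automatic). *)
Definition reconstructible (R : realType) (k : nat) (alpha : nat -> R) : Prop :=
  exists c : vert k -> R,
    (forall t, 0 < var_zeta alpha c t) /\
    ~ (corr_zeta_X0 alpha c @ \oo --> 0).

(* Main.v *)
Require Import Defs.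
From mathcomp Require Import all_boot all_order all_algebra.
From mathcomp Require Import all_classical all_reals all_analysis.
Import Order.TTheory GRing.Theory Num.Theory.
Local Open Scope classical_set_scope.
Local Open Scope ring_scope.
Set Implicit Arguments. Unset Strict Implicit.

Definition wid k n (h : (k <= n)%N) (i : 'I_k.+1) : 'I_n.+1 := widen_ord (h : (k.+1 <= n.+1)%N) i.
Definition res k n (h : (k <= n)%N) (v : vert n) : vert k := [ffun i => v (wid h i)].
Definition ext k n (u : vert k) : vert n :=
  [ffun j : 'I_n.+1 => if (j < k.+1)%N then u (inord j) else 0%N].
Definition face k n (v : vert n) : bool := [forall j : 'I_n.+1, (k < j)%N ==> (v j == 0%N)].

Lemma wid_inord k n (h : (k <= n)%N) (i : 'I_k.+1) : wid h i = inord i.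
Proof. apply: val_inj; rewrite /= inordK //; exact: (leq_trans (ltn_ord i) (h : (k.+1 <= n.+1)%N)). Qed.

Lemma res_ext k n (h : (k <= n)%N) (u : vert k) : res h (ext n u) = u.
Proof. apply/ffunP=> i; rewrite !ffunE /= ltn_ord; congr (u _); exact: inord_val. Qed.

Lemma face_ext k n (u : vert k) : face k (ext n u).
Proof. apply/forallP=> j; apply/implyP=> hj; by rewrite ffunE ltnS leqNgt hj. Qed.

Lemma ext_res k n (h : (k <= n)%N) (v : vert n) : face k v -> ext n (res h v) = v.
Proof.
move=> /forallP fv; apply/ffunP=> j; rewrite !ffunE.
case: ifP=> hj.
  rewrite wid_inord; congr (v _); apply: val_inj; rewrite /= !inordK //.
by move: (fv j); rewrite ltnNge -ltnS hj /= => /eqP ->.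
Qed.

Lemma ext_inj k n : injective (@ext k n).
Proof. move=> u1 u2 e; have h : (0 <= 0)%N by []. 
Abort.

Lemma big_face (T : Type) (idx : T) (op : Monoid.com_law idx) k n (h : (k <= n)%N)
  (F : 'I_n.+1 -> T) : (forall j : 'I_n.+1, (k < j)%N -> F j = idx) ->
  \big[op/idx]_(j < n.+1) F j = \big[op/idx]_(i < k.+1) F (wid h i).
Proof.
move=> F0.
pose G (j : nat) := F (inord j).
rewrite [RHS](eq_bigr (fun i : 'I_k.+1 => G i)); last by move=> i _; rewrite wid_inord.
rewrite (big_ord_widen _ G (h : (k.+1 <= n.+1)%N)).
rewrite [RHS]big_mkcond /=; apply: eq_bigr => j _; case: ifP => hj.
  by rewrite /G inord_val.
by rewrite F0 // ltnNge -ltnS hj.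
Qed.

Lemma ext_wid k n (h : (k <= n)%N) (u : vert k) i : ext n u (wid h i) = u i.
Proof. by rewrite ffunE /= ltn_ord; congr (u _); apply: val_inj; rewrite /= inordK. Qed.

Lemma ext_out k n (u : vert k) (j : 'I_n.+1) : (k < j)%N -> ext n u j = 0%N.
Proof. by move=> hj; rewrite ffunE ltnS leqNgt hj. Qed.

Lemma vsum_ext k n (h : (k <= n)%N) (u : vert k) : vsum (ext n u) = vsum u.
Proof.
rewrite /vsum (big_face _ h); last by move=> j hj; rewrite ext_out.
by apply: eq_bigr => i _; rewrite ext_wid.
Qed.

Lemma npos_ext k n (h : (k <= n)%N) (u : vert k) : npos (ext n u) = npos u.
Proof.
rewrite /npos -!sum1_card !(big_mkcond (fun i => _ \in _)) /=.
rewrite (big_face _ h); last by move=> j hj; rewrite inE ext_out.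
by apply: eq_bigr => i _; rewrite !inE ext_wid.
Qed.

Lemma dec_ext k n (h : (k <= n)%N) (u : vert k) i :
  dec (ext n u) (wid h i) = ext n (dec u i).
Proof.
apply/ffunP=> j; rewrite !ffunE; case: ifP => hj.
  by move/eqP: hj => -> /=; rewrite ltn_ord inord_val eqxx.
case: (ltnP j k.+1) => hjk //.
rewrite ifN //; apply: contraFN hj => /eqP e; apply/eqP; apply: val_inj.
by rewrite /= -e inordK.
Qed.

Definition emb k n (h : (k <= n)%N) (s : source k) : source n :=
  if s is Some (u, i) then Some (ext n u, wid h i) else None.
Definition proj k n (h : (k <= n)%N) (s : source n) : option (source k) :=
  match s with
  | None => Some None
  | Some (u, j) => if face k u && (j < k.+1)%N then Some (Some (res h u, inord j)) else None
  end.

Lemma proj_emb k n (h : (k <= n)%N) s : proj h (emb h s) = Some s.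
Proof.
case: s => [[u i]|] //=; rewrite face_ext ltn_ord res_ext /=.
by congr (Some (Some (_, _))); rewrite inord_val.
Qed.

Lemma projK k n (h : (k <= n)%N) s s0 : proj h s = Some s0 -> s = emb h s0.
Proof.
case: s => [[v j]|] /=; last by case=> <-.
case: ifP => // /andP[fv hj] [<-] /=.
rewrite ext_res //; congr (Some (_, _)); apply: val_inj; by rewrite /= inordK.
Qed.

Lemma emb_inj k n (h : (k <= n)%N) : injective (emb h).
Proof.
by move=> s1 s2 e; have := proj_emb h s1; rewrite e proj_emb => -[].
Qed.

Lemma coefX_ext (R : realType) (alpha : nat -> R) k n (h : (k <= n)%N) m :
  forall (u : vert k) (s : source n),
  Defs.coefX alpha m (ext n u) s = if proj h s is Some s0 then Defs.coefX alpha m u s0 else 0.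
Proof.
elim: m => [|m IH] u s.
  case E: (proj h s) => [s0|] /=.
    by rewrite (projK E); case: s0 {E} => [[]|].
  by case: s E => [[]|].
rewrite /= npos_ext // big_mkcond (big_face _ h); last first.
  by move=> j hj; rewrite ext_out.
under eq_bigr => i _ do rewrite ext_wid dec_ext IH.
case E: (proj h s) => [s0|].
  rewrite (projK E) [in RHS]big_mkcond; congr (_ * _); apply: eq_bigr => i _.
  case: ifP => // _; congr (_ + _%:R).
  change (Some (ext n (dec u i), wid h i)) with (emb h (Some (dec u i, i))).
  by rewrite (inj_eq (@emb_inj k n h)).
rewrite big1 ?mulr0 // => i _; case: ifP => // _.
rewrite add0r; case: eqP => // e.
by move: E; rewrite e; change (Some (ext n (dec u i), wid h i)) with (emb h (Some (dec u i, i))); rewrite proj_emb.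
Qed.

Lemma le_vsum k (u : vert k) i : (u i <= vsum u)%N.
Proof. by rewrite /vsum (bigD1 i) //= leq_addr. Qed.

Lemma mem_layer k t (u : vert k) : (u \in layer k t) = (vsum u == t).
Proof.
apply/idP/idP.
  case/mapP => f; rewrite mem_filter => /andP[/eqP ht _] ->.
  by apply/eqP; apply: etrans ht; rewrite /vsum; apply: eq_bigr => i _; rewrite ffunE.
move=> /eqP ht; apply/mapP.
exists [ffun i => inord (u i) : 'I_t.+1].
  rewrite mem_filter mem_enum andbT; apply/eqP; rewrite -ht /vsum.
  by apply: eq_bigr => i _; rewrite ffunE /= inordK // ltnS; exact: le_vsum.
by apply/ffunP => i /=; rewrite !ffunE /= inordK // ltnS -ht; exact: le_vsum.
Qed.

Lemma uniq_layer k t : uniq (layer k t).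
Proof.
rewrite map_inj_uniq; first by rewrite filter_uniq //; move: (enum_uniq {: {ffun 'I_k.+1 -> 'I_t.+1}}); rewrite enumT.
move=> f1 f2 e; apply/ffunP => i; apply: val_inj.
by have := congr1 (fun g : vert k => g i) e; rewrite !ffunE.
Qed.

Lemma mem_flat k t (u : vert k) :
  (u \in flatten [seq layer k s | s <- iota 0 t]) = (vsum u < t)%N.
Proof.
apply/flattenP/idP.
  by case=> l /mapP[s]; rewrite mem_iota => /andP[_ st] -> ; rewrite mem_layer => /eqP ->.
move=> ht; exists (layer k (vsum u)); last by rewrite mem_layer.
by apply/mapP; exists (vsum u); rewrite // mem_iota.
Qed.

Lemma uniq_flat k t : uniq (flatten [seq layer k s | s <- iota 0 t]).
Proof.
elim: t => [|t IH] //.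
rewrite -[t.+1]addn1 iotaD map_cat flatten_cat cat_uniq IH /= cats0 uniq_layer andbT.
apply/hasPn => u; rewrite add0n mem_layer => /eqP <-; by rewrite mem_flat ltnn.
Qed.

Lemma mem_sources k t (s : source k) :
  (s \in sources k t) = if s is Some (u, _) then (vsum u < t)%N else true.
Proof.
case: s => [[u i]|]; last by rewrite in_cons eqxx.
rewrite in_cons /=; apply/allpairsP/idP.
  by case=> [[v j]] /= [hv _ [-> _]]; rewrite -mem_flat.
by move=> hu; exists (u, i); rewrite /= mem_flat mem_enum.
Qed.

Lemma uniq_sources k t : uniq (sources k t).
Proof.
rewrite /= allpairs_uniq ?uniq_flat ?enum_uniq ?andbT //.
  by apply/allpairsP => -[p [_ _]].
by move=> [u1 i1] [u2 i2] _ _ /= [-> ->].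
Qed.

Definition cext (R : realType) k n (h : (k <= n)%N) (c : vert k -> R) : vert n -> R :=
  fun v => if face k v then c (res h v) else 0.

Lemma ext_inj k n (h : (k <= n)%N) : injective (@ext k n).
Proof. by move=> u1 u2 e; rewrite -(res_ext h u1) e res_ext. Qed.

Lemma perm_layer k n (h : (k <= n)%N) t :
  perm_eq [seq v <- layer n t | face k v] (map (@ext k n) (layer k t)).
Proof.
apply: uniq_perm.
- by rewrite filter_uniq // uniq_layer.
- by rewrite (map_inj_uniq (ext_inj h)) uniq_layer.
move=> v; rewrite mem_filter mem_layer; apply/idP/idP.
  case/andP => fv /eqP ht; apply/mapP; exists (res h v); last by rewrite ext_res.
  by rewrite mem_layer -ht -(vsum_ext h) ext_res.
by case/mapP => u; rewrite mem_layer => hu ->; rewrite face_ext vsum_ext.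
Qed.

Lemma zeta_ext (R : realType) (alpha : nat -> R) k n (h : (k <= n)%N) (c : vert k -> R) t s :
  zetacoef alpha (cext h c) t s = if proj h s is Some s0 then zetacoef alpha c t s0 else 0.
Proof.
rewrite /zetacoef (bigID (@face k n)) /= [X in _ + X]big1 ?addr0; last first.
  by move=> v /negbTE hv; rewrite /cext hv mul0r.
rewrite -big_filter (perm_big _ (perm_layer h t)) big_map.
under eq_bigr => u _ do rewrite /cext face_ext res_ext /Xcoef (vsum_ext h) (coefX_ext _ h).
case: (proj h s) => [s0|] //.
by rewrite big1 // => u _; rewrite mulr0.
Qed.

Lemma mem_emb_sources k n (h : (k <= n)%N) t s0 :
  (emb h s0 \in sources n t) = (s0 \in sources k t).
Proof. by case: s0 => [[u i]|]; rewrite !mem_sources //= (vsum_ext h). Qed.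

Lemma perm_sources k n (h : (k <= n)%N) t :
  perm_eq [seq s <- sources n t | proj h s != None] (map (emb h) (sources k t)).
Proof.
apply: uniq_perm.
- by rewrite filter_uniq // uniq_sources.
- by rewrite (map_inj_uniq (@emb_inj k n h)) uniq_sources.
move=> s; rewrite mem_filter; apply/idP/idP.
  case/andP; case E: (proj h s) => [s0|] // _; rewrite (projK E) mem_emb_sources => hs.
  by apply/mapP; exists s0.
by case/mapP => s0 hs0 ->; rewrite proj_emb mem_emb_sources.
Qed.

Lemma var_ext (R : realType) (alpha : nat -> R) k n (h : (k <= n)%N) (c : vert k -> R) t :
  var_zeta alpha (cext h c) t = var_zeta alpha c t.
Proof.
rewrite /var_zeta (bigID (fun s => proj h s != None)) /= [X in _ + X]big1 ?addr0; last first.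
  by move=> s; rewrite negbK zeta_ext => /eqP ->; rewrite expr0n.
rewrite -big_filter (perm_big _ (perm_sources h t)) big_map.
by apply: eq_bigr => s0 _; rewrite zeta_ext proj_emb.
Qed.

Lemma corr_ext (R : realType) (alpha : nat -> R) k n (h : (k <= n)%N) (c : vert k -> R) t :
  corr_zeta_X0 alpha (cext h c) t = corr_zeta_X0 alpha c t.
Proof. by rewrite /corr_zeta_X0 var_ext /cov_zeta_X0 zeta_ext. Qed.

Lemma recon_mono (R : realType) k n (h : (k <= n)%N) (alpha : nat -> R) :
  reconstructible k alpha -> reconstructible n alpha.
Proof.
case=> c [hv hc]; exists (cext h c); split.
  by move=> t; rewrite var_ext.
have -> : corr_zeta_X0 alpha (cext h c) = corr_zeta_X0 alpha c.
  by apply: funext => t; rewrite corr_ext.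
exact: hc.
Qed.

Theorem lemmal (R : realType) (d d' : nat) (alpha : nat -> R) :
  (d < d')%N ->
  (forall i : nat, (1 <= i <= d'.+1)%N -> 0 < alpha i) ->
  reconstructible d alpha -> reconstructible d' alpha.
Proof. by move=> hd _ H; exact: (@recon_mono R d d' (ltnW hd) alpha H). Qed.
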